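(* Let $\rho$ be an $n$-qubit state, fix a threshold $\varepsilon\ge0$, and let $A_1,\dots,A_t\in\mathrm{GL}(n,2)$ be the gauges queried so far, $A_r$ with columns $\mathbf{a}_{r,1},\dots,\mathbf{a}_{r,n}$. Let $Q_t=\{\mathbf{a}_{r,i}:r\le t,\ i\le n\}$, $\mathcal{F}_t=\{p\in\Delta(\mathbb{F}_2^n):\widehat p(\mathbf{u})=\mu_\rho(\mathbf{u})\ \forall\mathbf{u}\in Q_t\}$, and let $p_t^-\in\arg\min_{p\in\mathcal{F}_t}p(\mathbf{0})$, $p_t^+\in\arg\max_{p\in\mathcal{F}_t}p(\mathbf{0})$ be any endpoint optimizers, $W_t=p_t^+(\mathbf{0})-p_t^-(\mathbf{0})$. Define $d_t(\mathbf{u})=|\widehat{p_t^+}(\mathbf{u})-\widehat{p_t^-}(\mathbf{u})|$ for $\mathbf{u}\neq\mathbf{0}$, $M_t=(\mathbb{F}_2^n\setminus\{\mathbf{0}\})\setminus Q_t$, $m_t=|M_t|$, $D_t=\sum_{\mathbf{u}\in M_t}d_t(\mathbf{u})$, $\Delta_t=\max_{\mathbf{u}\in M_t}d_t(\mathbf{u})$. For a gauge $A$ with columns $\mathbf{a}_1,\dots,\mathbf{a}_n$ put $\Phi_t(A)=\sum_{i=1}^n d_t(\mathbf{a}_i)$, let $\Gamma_t=\{A\in\mathrm{GL}(n,2): \{\mathbf{a}_1,\dots,\mathbf{a}_n\}\not\subseteq Q_t\}$, and let $A_{t+1}\in\arg\max_{A\in\Gamma_t}\Phi_t(A)$. Suppose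 round $t$ is nonterminal, i.e. $W_t>\varepsilon$. Then $$W_t\le 2^{-n}D_t\le\frac{m_t}{2^n}\Delta_t,\qquad\text{and}\qquad \Phi_t(A_{t+1})\ge\Delta_t\ge\frac{2^n}{m_t}W_t.$$
   Context: Setting: $|\psi\rangle$ is an $n$-qubit stabilizer state whose stabilizer group is generated by independent commuting Pauli operators $g_1,\dots,g_n$; $g(\mathbf{u})=\prod_j g_j^{u_j}$ for $\mathbf{u}\in\mathbb{F}_2^n$. Syndrome projectors $\Pi_{\mathbf{s}}=2^{-n}\prod_j(I+(-1)^{s_j}g_j)$ are orthogonal rank-one projectors summing to identity with $\Pi_{\mathbf{0}}=|\psi\rangle\langle\psi|$. $p_\rho(\mathbf{s})=\mathrm{tr}(\rho\Pi_{\mathbf{s}})$, $\mu_\rho(\mathbf{u})=\mathrm{tr}(\rho g(\mathbf{u}))=\widehat{p_\rho}(\mathbf{u})$ with Walsh transform $\widehat p(\mathbf{u})=\sum_{\mathbf{s}}(-1)^{\mathbf{u}\cdot\mathbf{s}}p(\mathbf{s})$ (mod-2 inner product). $\Delta(\mathbb{F}_2^n)$ is the set of probability distributions on $\mathbb{F}_2^n$; $\mathrm{GL}(n,2)$ the invertible binary $n\times n$ matrices, whose columns are called the labels queried by that gauge. *)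

(* Defs.v *)
From HB Require Import structures.
From mathcomp Require Import all_boot all_order all_algebra.
Set Implicit Arguments. Unset Strict Implicit. Unset Printing Implicit Defensive.
Import Order.TTheory GRing.Theory Num.Theory.
Local Open Scope ring_scope.

Notation vec n := 'cV['F_2]_n.

Section Defs.
Variables (R : realFieldType) (n : nat).

Definition dot2 (u s : vec n) : 'F_2 := (u^T *m s) 0 0.

Definition wsign (u s : vec n) : R := if dot2 u s == 0 then 1 else -1.

Definition walsh (p : vec n -> R) (u : vec n) : R :=
  \sum_(s : vec n) wsign u s * p s.

Definition is_distr (p : vec n -> R) : Prop :=
  (forall s, 0 <= p s) /\ \sum_(s : vec n) p s = 1.

Definition cols (A : 'M['F_2]_n) : {set vec n} := [set col i A | i : 'I_n].

Definition queried (t : nat) (As : 'I_t -> 'M['F_2]_n) : {set vec n} :=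
  [set col i (As r) | r : 'I_t, i : 'I_n].

Definition feasible (mu : vec n -> R) (Q : {set vec n}) (p : vec n -> R) : Prop :=
  is_distr p /\ forall u, u \in Q -> walsh p u = mu u.

Definition dgap (pp pm : vec n -> R) (u : vec n) : R :=
  `| walsh pp u - walsh pm u |.

Definition missing (Q : {set vec n}) : {set vec n} :=
  [set u : vec n | (u != 0) && (u \notin Q)].

Definition Phi (pp pm : vec n -> R) (A : 'M['F_2]_n) : R :=
  \sum_(i < n) dgap pp pm (col i A).

Definition in_Gamma (Q : {set vec n}) (A : 'M['F_2]_n) : Prop :=
  A \in unitmx /\ ~~ (cols A \subset Q).

End Defs.

(* Main.v *)
Require Import Defs.
From HB Require Import structures.
From mathcomp Require Import all_boot all_order all_algebra.
From mathcomp Require Import ring lra.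
Import Order.TTheory GRing.Theory Num.Theory.
Local Open Scope ring_scope.

Set Warnings "-notation-overridden,-ambiguous-paths".
Lemma F2_cases (x : 'F_2) : x = 0 \/ x = 1.
Proof. case: x => [[|[|k]] Hk] //; [left|right]; exact/eqP. Qed.

Lemma F2_nz (x : 'F_2) : x != 0 -> x = 1.
Proof. by case: (F2_cases x) => ->. Qed.

Lemma dot2D n (u v s : vec n) : dot2 (u + v) s = dot2 u s + dot2 v s.
Proof. by rewrite /dot2 linearD mulmxDl mxE. Qed.

Lemma dot2_delta n i (s : vec n) : dot2 (delta_mx i 0) s = s i 0.
Proof.
rewrite /dot2 trmx_delta -rowE mxE. by [].
Qed.

Lemma dot20 n (s : vec n) : dot2 0 s = 0.
Proof. by rewrite /dot2 linear0 mul0mx mxE. Qed.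
Lemma dot2r0 n (u : vec n) : dot2 u 0 = 0.
Proof. by rewrite /dot2 mulmx0 mxE. Qed.

Lemma card_vec n : #|{: vec n}| = (2 ^ n)%N.
Proof. by rewrite card_mx card_Fp // muln1. Qed.

Lemma charsum (R : realFieldType) n (s : vec n) :
  \sum_(u : vec n) (wsign R u s) = if s == 0 then (2 ^+ n)%:R else 0.
Proof.
case: eqP => [->|/eqP Hs].
  under eq_bigr do rewrite /wsign dot2r0 eqxx.
  by rewrite sumr_const card_vec natrX.
have [i Hi] : exists i, s i 0 != 0.
  apply/existsP; apply: contraR Hs => /existsPn H; apply/eqP/matrixP => j k.
  by rewrite [k]ord1 mxE; apply/eqP; move: (H j); rewrite negbK.
set S := \sum_u _.
have HS : S = - S.
  rewrite {1}/S (reindex_inj (addIr (delta_mx i 0))) /= /S -sumrN.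
  apply: eq_bigr => u _; rewrite /wsign dot2D dot2_delta (F2_nz _ Hi).
  by case: (F2_cases (dot2 u s)) => ->; rewrite ?opprK.

lra.
Qed.

Lemma walsh_inv (R : realFieldType) n (p : vec n -> R) :
  \sum_(u : vec n) walsh p u = 2 ^+ n * p 0.
Proof.
rewrite /walsh exchange_big /=.
under eq_bigr do rewrite -mulr_suml charsum.
rewrite (bigD1 0) //= eqxx big1 ?addr0 ?natrX //.
by move=> s /negbTE ->; rewrite mul0r.
Qed.

Lemma walsh0 (R : realFieldType) n (p : vec n -> R) : walsh p 0 = \sum_s p s.
Proof. by apply: eq_bigr => s _; rewrite /wsign dot20 eqxx mul1r. Qed.

Lemma rank1_unit (F : fieldType) n (v e : 'cV[F]_n) :
  e^T *m v = 0 -> (1%:M + v *m e^T) \in unitmx.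
Proof.
move=> ev.
apply: (proj1 (@mulmx1_unit _ _ _ (1%:M - v *m e^T) _)).
rewrite mulmxBr mulmx1 mulmxDl mul1mx -!mulmxA (mulmxA e^T) ev mul0mx mulmx0.
by rewrite addr0 addrK.
Qed.

Lemma extend_basis n (u : vec n) : u != 0 ->
  exists A : 'M['F_2]_n, A \in unitmx /\ exists i, col i A = u.
Proof.
move=> Hu.
have [i Hi] : exists i, u i 0 != 0.
  apply/existsP; apply: contraR Hu => /existsPn H; apply/eqP/matrixP => j k.
  by rewrite [k]ord1 mxE; apply/eqP; move: (H j); rewrite negbK.
pose e : vec n := delta_mx i 0.
pose v := u - e.
have ev : e^T *m v = 0.
  rewrite /v mulmxBr /e trmx_delta mul_delta_mx -rowE.
  apply/matrixP => a b; rewrite [a]ord1 [b]ord1 !mxE (F2_nz _ Hi) /=.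
  by rewrite subrr.
have ee : e^T *m e = 1%:M.
  rewrite /e trmx_delta mul_delta_mx; apply/matrixP => a b.
  by rewrite [a]ord1 [b]ord1 !mxE.
exists (1%:M + v *m e^T); split; first exact: rank1_unit.
exists i; rewrite colE mulmxDl mul1mx -mulmxA ee mulmx1 /v.
by rewrite addrC subrK.
Qed.

Theorem proposition8 (R : realFieldType) (n t : nat)
  (q : vec n -> R) (eps : R) (As : 'I_t -> 'M['F_2]_n)
  (pm pp : vec n -> R) (Anext : 'M['F_2]_n) :
  is_distr q ->
  0 <= eps ->
  (forall r, As r \in unitmx) ->
  feasible (walsh q) (queried As) pm ->
  (forall p, feasible (walsh q) (queried As) p -> pm 0 <= p 0) ->
  feasible (walsh q) (queried As) pp ->
  (forall p, feasible (walsh q) (queried As) p -> p 0 <= pp 0) ->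
  in_Gamma (queried As) Anext ->
  (forall A, in_Gamma (queried As) A -> Phi pp pm A <= Phi pp pm Anext) ->
  let W := pp 0 - pm 0 in
  let M := missing (queried As) in
  let m : R := (#|M|)%:R in
  let D := \sum_(u in M) dgap pp pm u in
  let Delta := \big[Num.max/0]_(u in M) dgap pp pm u in
  eps < W ->
  W <= D / 2 ^+ n /\ D / 2 ^+ n <= m / 2 ^+ n * Delta /\
  Delta <= Phi pp pm Anext /\ 2 ^+ n / m * W <= Delta.
Proof.
move=> Hq _ _ [[pm_nn pm1] pmQ] _ [[pp_nn pp1] ppQ] _ HG HPhi W M m D Delta _.
have Npos : 0 < (2 : R) ^+ n by rewrite exprn_gt0.
have dge0 : forall u, 0 <= dgap pp pm u by move=> u; exact: normr_ge0.
have key : 2 ^+ n * W = \sum_(u in M) (walsh pp u - walsh pm u).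
  rewrite /W mulrBr -!walsh_inv -sumrB (bigID (mem M)) /=.
  rewrite [X in _ + X]big1 ?addr0 //.
  move=> u; rewrite /M inE negb_and negbK => /orP [/eqP->|uQ].
    by rewrite !walsh0 pp1 pm1 subrr.
  by rewrite ppQ ?pmQ ?subrr //; apply/negPn.
have h1 : W <= D / 2 ^+ n.
  rewrite ler_pdivlMr // mulrC key; apply: ler_sum => u _; exact: ler_norm.
have hD : forall u, u \in M -> dgap pp pm u <= Delta.
  by move=> u uM; rewrite /Delta; apply: (le_bigmax_cond _ (P := mem M)).
have Dge0 : 0 <= Delta by rewrite /Delta; exact: bigmax_ge_id.
have h2 : D / 2 ^+ n <= m / 2 ^+ n * Delta.
  rewrite mulrAC ler_pM2r ?invr_gt0 //.
  rewrite /D /m mulr_natl -sumr_const; apply: ler_sum => u uM; exact: hD.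
have PhiA0 : forall A, 0 <= Phi pp pm A by move=> A; apply: sumr_ge0.
have h3 : Delta <= Phi pp pm Anext.
  rewrite /Delta; apply: bigmax_le => // u uM.
  have := uM; rewrite /M inE => /andP [u0 uQ].
  have [A [HA [i Hi]]] := extend_basis _ _ u0.
  have HGA : in_Gamma (queried As) A.
    split => //; apply/subsetPn; exists u => //.
    by apply/imsetP; exists i.
  apply: le_trans (HPhi A HGA).
  rewrite /Phi (bigD1 i) //= Hi lerDl; exact: sumr_ge0.
do !split => //.
have [m0|mn0] := eqVneq m 0.
  by rewrite m0 invr0 mulr0 mul0r.
have -> : Delta = 2 ^+ n / m * (m / 2 ^+ n * Delta).
  field; rewrite mn0 andbT; exact: lt0r_neq0.
apply: ler_wpM2l; first by rewrite divr_ge0 // ?ltW // /m ler0n.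
exact: le_trans h1 h2.
Qed.
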